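(* Let $N\ge 2$ be an integer, let $\gamma>0$, $\upsilon\in(0,1]$, $P_b>0$, $h>0$, $T>0$, and let $p_1>p_2>\cdots>p_N>0$ with $p_1\le1$. Consider Problem P3: minimize $\sum_{k=1}^N \gamma p_k f_k^2$ over $(f_1,\dots,f_N,y_1,\dots,y_N)$ subject to $\sum_{k=1}^N \gamma f_k^2 \le \upsilon P_b h \sum_{k=1}^N y_k$, $\sum_{k=1}^N y_k\le T$, and $f_k>0$, $\frac{1}{f_k}-y_k\le 0$ for all $k$, and let $\bar E^*_{\mathrm{loc}}$ denote its optimal value (the minimum average energy consumption). Define $a=\frac{\gamma N^3}{\upsilon T^3}$ and $a'=\frac{\gamma}{\upsilon T^3}\left(\sum_{k=1}^N p_k^{1/3}\right)^2\left(\sum_{k=1}^N p_k^{-2/3}\right)$. Then: (1) if $a< P_bh<a'$, $$\bar E^*_{\mathrm{loc}}=\frac{\gamma}{T^2}\left[\sum_{k=1}^N(p_k+\lambda)^{1/3}\right]^2\left[\sum_{k=1}^N p_k(p_k+\lambda)^{-2/3}\right],$$ where $\lambda>0$ satisfies $\left[\sum_{k=1}^N (p_k+\lambda)^{1/3}\right]^2\left[\sum_{k=1}^N (p_k+\lambda)^{-2/3}\right]=\frac{\upsilon P_bhT^3}{\gamma}$; if $P_bh=a$, $\bar E^*_{\mathrm{loc}}=\frac{\gamma N^2}{T^2}\sum_{k=1}^N p_k$; moreover, on $a\le P_bh<a'$, $\bar E^*_{\mathrm{loc}}$ is a monotone decreasing function of $P_bh$ and $$\frac{\gamma}{T^2}\left(\sum_{k=1}^N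 p_k^{1/3}\right)^3<\bar E^*_{\mathrm{loc}}\le\frac{\gamma N^2}{T^2}\sum_{k=1}^N p_k;$$ (2) if $P_bh\ge a'$, $\bar E^*_{\mathrm{loc}}=\frac{\gamma}{T^2}\left(\sum_{k=1}^N p_k^{1/3}\right)^3$, which is independent of $P_bh$.
   Context: $f_k$ is the CPU frequency of the $k$-th cycle, $p_k$ the probability that the $k$-th cycle is executed, $\gamma f^2$ the energy per cycle at frequency $f$, $\upsilon P_b h$ the harvested power and $T$ the deadline. *)

(* Defs.v *)
From HB Require Import structures.
From mathcomp Require Import all_boot all_order all_algebra.
From mathcomp Require Import all_classical all_reals exp.
Set Implicit Arguments. Unset Strict Implicit. Unset Printing Implicit Defensive.
Import Order.TTheory GRing.Theory Num.Theory.
Local Open Scope classical_set_scope.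
Local Open Scope ring_scope.

(* Indices k = 1..N of the paper are represented by k = 0..N-1. *)

(* Feasible set of Problem P3 (c stands for P_b * h). *)
Definition P3_feasible {R : realType} (N : nat) (gamma upsilon c T : R)
    (f y : nat -> R) : Prop :=
  (\sum_(k < N) gamma * f k ^+ 2 <= upsilon * c * \sum_(k < N) y k) /\
  (\sum_(k < N) y k <= T) /\
  (forall k, (k < N)%N -> 0 < f k /\ 1 / f k - y k <= 0).

Definition P3_objective {R : realType} (N : nat) (gamma : R) (p f : nat -> R) : R :=
  \sum_(k < N) gamma * p k * f k ^+ 2.

Definition E_loc_opt {R : realType} (N : nat) (gamma upsilon c T : R)
    (p : nat -> R) : R :=
  inf [set e | exists f y, P3_feasible N gamma upsilon c T f y /\
                          e = P3_objective N gamma p f].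

Definition a_thr {R : realType} (N : nat) (gamma upsilon T : R) : R :=
  gamma * (N%:R) ^+ 3 / (upsilon * T ^+ 3).

Definition a'_thr {R : realType} (N : nat) (gamma upsilon T : R) (p : nat -> R) : R :=
  gamma / (upsilon * T ^+ 3) * (\sum_(k < N) powR (p k) (1/3)) ^+ 2
    * (\sum_(k < N) powR (p k) (-(2/3))).

(* Main.v *)
Require Import Defs.
From HB Require Import structures.
From mathcomp Require Import all_boot all_order all_algebra.
From mathcomp Require Import all_classical all_reals exp.
From mathcomp Require Import topology normedtype derive realfun.
From mathcomp Require Import ring lra zify.
Import Order.TTheory GRing.Theory Num.Theory.
Import numFieldNormedType.Exports.
Local Open Scope classical_set_scope.
Local Open Scope ring_scope.
Set Implicit Arguments. Unset Strict Implicit. Unset Printing Implicit Defensive.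

Section Pow.
Variable R : realType.

Lemma cube3 (x : R) : 0 <= x -> powR x (1/3) ^+ 3 = x.
Proof.
move=> hx.
rewrite -powR_mulrn ?powR_ge0 // -powRrM.
have -> : (1/3 * 3%:R : R) = 1 by field.
by rewrite powRr1.
Qed.

Lemma pow23 (x : R) : powR x (-(2/3)) = (powR x (1/3) ^+ 2)^-1.
Proof.
rewrite powRN -powR_mulrn ?powR_ge0 // -powRrM.
by have -> : (1/3 * 2%:R : R) = 2/3 by field.
Qed.

Lemma q_gt0 (x : R) : 0 < x -> 0 < powR x (1/3).
Proof. by move=> hx; apply: powR_gt0. Qed.

Lemma sum_cont (n : nat) (F : 'I_n -> R -> R) (x : R) :
  (forall k, {for x, continuous (F k)}) ->
  {for x, continuous (fun l => \sum_(k < n) F k l)}.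
Proof.
move=> hF.
have -> : (fun l => \sum_(k < n) F k l) = (fun l => \sum_(k <- enum 'I_n) F k l).
  by apply/funext => l; rewrite big_enum.
elim: (enum 'I_n) => [|k s IH].
  have -> : (fun l : R => \sum_(k <- [::]) F k l) = (fun=> 0).
    by apply/funext => l; rewrite big_nil.
  exact: cst_continuous.
have -> : (fun l : R => \sum_(j <- k :: s) F j l) = (F k \+ (fun l => \sum_(j <- s) F j l)).
  by apply/funext => l; rewrite big_cons.

exact: (@cvgD R R _ _ _ _ _ _ _ (hF k) IH).
Qed.

Lemma powR_cont (c r x : R) : 0 < c + x -> {for x, continuous (fun l => powR (c + l) r)}.
Proof.
move=> hx.
have hc : {for x, continuous (fun l : R => c + l)}.
  apply: (@cvgD R R); [exact: cvg_cst | exact: cvg_id].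
have hp : {for (c + x), continuous (fun a : R => powR a r)}.
  apply: differentiable_continuous.
  apply/derivable1_diffP.
  apply: derivable_powR.
  by rewrite in_itv /= hx.
exact: (continuous_comp hc hp).
Qed.

End Pow.

Section Main.
Variables (R : realType) (N : nat) (gamma upsilon T : R) (p : nat -> R).
Hypotheses (hN : (0 < N)%N) (hg : 0 < gamma) (hu : 0 < upsilon) (hT : 0 < T)
  (hp : forall k, (k < N)%N -> 0 < p k).

Definition good (c : R) (f : nat -> R) :=
  (forall k, (k < N)%N -> 0 < f k) /\ \sum_(k < N) 1 / f k <= T /\
  \sum_(k < N) gamma * f k ^+ 2 <= upsilon * c * T.

Lemma obj_ge0 f : 0 <= P3_objective N gamma p f.
Proof.
apply: sumr_ge0 => k _; apply: mulr_ge0; last exact: sqr_ge0.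
by apply: mulr_ge0; [exact: ltW | exact: (ltW (@hp _ (ltn_ord k)))].
Qed.

Lemma feas_good c f y : 0 <= c -> P3_feasible N gamma upsilon c T f y -> good c f.
Proof.
move=> hc [h1 [h2 h3]]; split; first by move=> k /h3 [].
have hs : \sum_(k < N) 1 / f k <= \sum_(k < N) y k.
  apply: ler_sum => k _; have [_ ] := h3 _ (ltn_ord k); lra.
split; first exact: le_trans hs h2.
apply: (le_trans h1); apply: ler_wpM2l => //.
by apply: mulr_ge0 => //; exact: ltW.
Qed.

Lemma good_feas c f : good c f -> exists y, P3_feasible N gamma upsilon c T f y.
Proof.
move=> [h1 [h2 h3]].
set d := (T - \sum_(k < N) 1 / f k) / N%:R.
have hN0 : (N%:R : R) != 0 by rewrite pnatr_eq0 -lt0n.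
have hNp : 0 < (N%:R : R) by rewrite ltr0n.
have hd : 0 <= d by apply: divr_ge0; [lra | exact: ltW].
exists (fun k => 1 / f k + d).
have hs : \sum_(k < N) (1 / f k + d) = T.
  rewrite big_split /= sumr_const card_ord -mulr_natr /d.
  by field.
split; first by rewrite hs.
split; first by rewrite hs.
move=> k hk; split; first exact: h1.
lra.
Qed.

Lemma E_le c f : good c f -> E_loc_opt N gamma upsilon c T p <= P3_objective N gamma p f.
Proof.
move=> hf; have [y hy] := good_feas hf.
rewrite /E_loc_opt; apply: ge_inf; last by exists f, y.
by exists 0 => e [f' [y' [_ ->]]]; exact: obj_ge0.
Qed.

Lemma E_ge c m : 0 <= c -> (exists f, good c f) ->
  (forall f, good c f -> m <= P3_objective N gamma p f) ->
  m <= E_loc_opt N gamma upsilon c T p.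
Proof.
move=> hc [f0 hf0] hm; rewrite /E_loc_opt; apply: lb_le_inf.
  have [y hy] := good_feas hf0.
  by exists (P3_objective N gamma p f0), f0, y.
move=> e [f [y [hfy ->]]]; apply: hm; exact: feas_good hfy.
Qed.

Lemma E_eq c f : 0 <= c -> good c f ->
  (forall g, good c g -> P3_objective N gamma p f <= P3_objective N gamma p g) ->
  E_loc_opt N gamma upsilon c T p = P3_objective N gamma p f.
Proof.
move=> hc hf hm; apply/le_anti/andP; split; first exact: E_le.
apply: E_ge => //; by exists f.
Qed.


Lemma term_eq (q f m : R) : 0 < f ->
  (q * f - m) ^+ 2 * (q * f + 2 * m) / f = q ^+ 3 * f ^+ 2 - 3 * m ^+ 2 * q + 2 * m ^+ 3 * (1 / f).
Proof. move=> hf; field; exact: lt0r_neq0. Qed.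

Lemma term_ge0 (q f m : R) : 0 < q -> 0 < f -> 0 <= m ->
  0 <= (q * f - m) ^+ 2 * (q * f + 2 * m) / f.
Proof.
move=> hq hf hm; apply: divr_ge0; last exact: ltW.
apply: mulr_ge0; first exact: sqr_ge0.
have : 0 < q * f by apply: mulr_gt0.
lra.
Qed.

Lemma L1_gap (q f : nat -> R) : (forall k, (k < N)%N -> 0 < q k) ->
  (forall k, (k < N)%N -> 0 < f k) -> \sum_(k < N) 1 / f k <= T ->
  \sum_(k < N) (q k * f k - (\sum_(j < N) q j) / T) ^+ 2 *
      (q k * f k + 2 * ((\sum_(j < N) q j) / T)) / f k
  <= \sum_(k < N) q k ^+ 3 * f k ^+ 2 - (\sum_(j < N) q j) ^+ 3 / T ^+ 2.
Proof.
move=> hq hf hs.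
set S := \sum_(j < N) q j.
set m := S / T.
have hS : 0 <= S by apply: sumr_ge0 => k _; exact: (ltW (@hq _ (ltn_ord k))).
have hm : 0 <= m by apply: divr_ge0 => //; exact: ltW.
have -> : \sum_(k < N) (q k * f k - m) ^+ 2 * (q k * f k + 2 * m) / f k =
   \sum_(k < N) q k ^+ 3 * f k ^+ 2 - 3 * m ^+ 2 * S + 2 * m ^+ 3 * \sum_(k < N) 1 / f k.
  rewrite /S !mulr_sumr -sumrB -big_split /=.
  by apply: eq_bigr => k _; rewrite term_eq //; exact: (@hf _ (ltn_ord k)).
have hm3 : 0 <= m ^+ 3 by apply: exprn_ge0.
have : 2 * m ^+ 3 * \sum_(k < N) 1 / f k <= 2 * m ^+ 3 * T.
  by apply: ler_wpM2l => //; apply: mulr_ge0.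
have -> : 2 * m ^+ 3 * T = 3 * m ^+ 2 * S - S ^+ 3 / T ^+ 2.
  rewrite /m; field; exact: lt0r_neq0.
lra.
Qed.

Lemma L1 (q f : nat -> R) : (forall k, (k < N)%N -> 0 < q k) ->
  (forall k, (k < N)%N -> 0 < f k) -> \sum_(k < N) 1 / f k <= T ->
  (\sum_(j < N) q j) ^+ 3 / T ^+ 2 <= \sum_(k < N) q k ^+ 3 * f k ^+ 2.
Proof.
move=> hq hf hs; have := L1_gap hq hf hs.
set L := \sum_(k < N) _ / f k.
have : 0 <= L.
  apply: sumr_ge0 => k _; apply: term_ge0.
  - exact: (@hq _ (ltn_ord k)).
  - exact: (@hf _ (ltn_ord k)).
  apply: divr_ge0; last exact: ltW.
  by apply: sumr_ge0 => j _; exact: (ltW (@hq _ (ltn_ord j))).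
lra.
Qed.


Definition qw (w : nat -> R) k := powR (w k) (1/3).
Definition Sw (w : nat -> R) := \sum_(k < N) qw w k.
Definition fstar (w : nat -> R) k := Sw w / (T * qw w k).

Section W.
Variable w : nat -> R.
Hypothesis hw : forall k, (k < N)%N -> 0 < w k.

Lemma qw_gt0 k : (k < N)%N -> 0 < qw w k.
Proof. by move=> hk; apply: q_gt0; exact: hw. Qed.

Lemma Sw_gt0 : 0 < Sw w.
Proof.
have h0 : 0 <= Sw w by apply: sumr_ge0 => k _; exact: (ltW (qw_gt0 (ltn_ord k))).
rewrite lt_def h0 andbT; apply/negP => /eqP/psumr_eq0P h.
have := qw_gt0 hN.
have -> : qw w 0 = qw w (Ordinal hN) by [].
rewrite (h _ (Ordinal hN)) ?ltxx //.
by move=> k _; exact: (ltW (qw_gt0 (ltn_ord k))).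
Qed.

Lemma fstar_gt0 k : (k < N)%N -> 0 < fstar w k.
Proof.
move=> hk; apply: divr_gt0; first exact: Sw_gt0.
by apply: mulr_gt0 => //; exact: qw_gt0.
Qed.

Lemma sum_inv_fstar : \sum_(k < N) 1 / fstar w k = T.
Proof.
have hS := Sw_gt0.
rewrite (eq_bigr (fun k : 'I_N => T / Sw w * qw w k)); last first.
  move=> k _; rewrite /fstar; field; apply/andP; split; first exact: lt0r_neq0.
  apply/andP; split; [exact: lt0r_neq0 (qw_gt0 (ltn_ord k)) | exact: lt0r_neq0].
rewrite -mulr_sumr -/(Sw w); field; exact: lt0r_neq0.
Qed.

Lemma fstar_sq k : (k < N)%N ->
  fstar w k ^+ 2 = Sw w ^+ 2 / T ^+ 2 * powR (w k) (-(2/3)).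
Proof.
move=> hk; rewrite pow23 /fstar -/(qw w k); field.
apply/andP; split; [exact: lt0r_neq0 (qw_gt0 hk) | exact: lt0r_neq0].
Qed.

Lemma sum_u_fstar (u : nat -> R) :
  \sum_(k < N) gamma * u k * fstar w k ^+ 2 =
  gamma * Sw w ^+ 2 / T ^+ 2 * \sum_(k < N) u k * powR (w k) (-(2/3)).
Proof.
rewrite mulr_sumr; apply: eq_bigr => k _; rewrite fstar_sq //; ring.
Qed.

Lemma sum_w_fstar : \sum_(k < N) w k * fstar w k ^+ 2 = Sw w ^+ 3 / T ^+ 2.
Proof.
rewrite (eq_bigr (fun k : 'I_N => Sw w ^+ 2 / T ^+ 2 * qw w k)); last first.
  move=> k _; rewrite fstar_sq // pow23 -/(qw w k).
  rewrite -{1}(@cube3 _ (w k)); last exact: (ltW (hw (ltn_ord k))).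
  rewrite -/(qw w k); field.
  by apply/andP; split; [exact: lt0r_neq0 | exact: lt0r_neq0 (qw_gt0 (ltn_ord k))].
rewrite -big_distrr /= -/(Sw w); field; exact: lt0r_neq0.
Qed.

Lemma L1w f : (forall k, (k < N)%N -> 0 < f k) -> \sum_(k < N) 1 / f k <= T ->
  Sw w ^+ 3 / T ^+ 2 <= \sum_(k < N) w k * f k ^+ 2.
Proof.
move=> hf hs; have := L1 (qw_gt0) hf hs.
rewrite -/(Sw w) => /le_trans; apply; rewrite le_eqVlt; apply/orP; left; apply/eqP.
apply: eq_bigr => k _; rewrite /qw cube3 //; exact: (ltW (hw (ltn_ord k))).
Qed.

End W.

Lemma obj_lam lam f : P3_objective N gamma p f =
  gamma * \sum_(k < N) (p k + lam) * f k ^+ 2 - lam * \sum_(k < N) gamma * f k ^+ 2.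
Proof.
by rewrite /P3_objective !mulr_sumr -sumrB; apply: eq_bigr => k _; ring.
Qed.

Lemma energy_fstar w : (forall k, (k < N)%N -> 0 < w k) ->
  \sum_(k < N) gamma * fstar w k ^+ 2 =
  gamma * Sw w ^+ 2 / T ^+ 2 * \sum_(k < N) powR (w k) (-(2/3)).
Proof.
move=> hw.
rewrite mulr_sumr; apply: eq_bigr => k _; rewrite fstar_sq //; ring.
Qed.

Lemma good_fstar w c : (forall k, (k < N)%N -> 0 < w k) ->
  gamma * Sw w ^+ 2 / T ^+ 2 * \sum_(k < N) powR (w k) (-(2/3)) <= upsilon * c * T ->
  good c (fstar w).
Proof.
move=> hw he; split; first by move=> k hk; exact: fstar_gt0.
split; first by rewrite sum_inv_fstar // le_refl.
by rewrite energy_fstar.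
Qed.

Lemma caseA c : a'_thr N gamma upsilon T p <= c ->
  E_loc_opt N gamma upsilon c T p = gamma / T ^+ 2 * (\sum_(k < N) powR (p k) (1/3)) ^+ 3.
Proof.
move=> hc.
have hw : forall k, (k < N)%N -> 0 < p k by [].
have hS := Sw_gt0 hw.
have hgood : good c (fstar p).
  apply: good_fstar => //.
  have -> : gamma * Sw p ^+ 2 / T ^+ 2 * \sum_(k < N) powR (p k) (-(2/3)) =
     upsilon * a'_thr N gamma upsilon T p * T.
    rewrite /a'_thr /Sw /qw; field.
    by apply/andP; split; exact: lt0r_neq0.
  by apply: ler_wpM2r; [exact: ltW | apply: ler_wpM2l => //; exact: ltW].
have hobj : forall f, P3_objective N gamma p f = gamma * \sum_(k < N) p k * f k ^+ 2.
  by move=> f; rewrite /P3_objective mulr_sumr; apply: eq_bigr => k _; rewrite mulrA.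
have ha' : 0 <= a'_thr N gamma upsilon T p.
  rewrite /a'_thr; apply: mulr_ge0; last by apply: sumr_ge0 => k _; exact: powR_ge0.
  apply: mulr_ge0; last exact: sqr_ge0.
  apply: divr_ge0; first exact: ltW.
  by apply: mulr_ge0; [exact: ltW | apply: exprn_ge0; exact: ltW].
rewrite (@E_eq c (fstar p)) //; last 2 first.
- exact: le_trans hc.
- move=> g [hg1 [hg2 _]].
  rewrite !hobj sum_w_fstar //; apply: ler_wpM2l; first exact: ltW.
  exact: L1w.
rewrite hobj sum_w_fstar //; rewrite /Sw /qw; field; exact: lt0r_neq0.
Qed.

Lemma caseB c lam : 0 <= c -> 0 < lam ->
  (\sum_(k < N) powR (p k + lam) (1/3)) ^+ 2 * (\sum_(k < N) powR (p k + lam) (-(2/3)))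
    = upsilon * c * T ^+ 3 / gamma ->
  exists f, good c f /\ E_loc_opt N gamma upsilon c T p = P3_objective N gamma p f /\
    P3_objective N gamma p f =
    gamma / T ^+ 2 * (\sum_(k < N) powR (p k + lam) (1/3)) ^+ 2
      * (\sum_(k < N) p k * powR (p k + lam) (-(2/3))).
Proof.
move=> hc hl heq.
set w := fun k => p k + lam.
have hw : forall k, (k < N)%N -> 0 < w k.
  by move=> k hk; rewrite /w; apply: addr_gt0 => //; exact: hp.
have hS := Sw_gt0 hw.
have hE : gamma * Sw w ^+ 2 / T ^+ 2 * \sum_(k < N) powR (w k) (-(2/3)) = upsilon * c * T.
  have -> : gamma * Sw w ^+ 2 / T ^+ 2 * \sum_(k < N) powR (w k) (-(2/3)) =
    gamma / T ^+ 2 * ((\sum_(k < N) powR (p k + lam) (1/3)) ^+ 2 *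
       (\sum_(k < N) powR (p k + lam) (-(2/3)))) by rewrite /Sw /qw /w; ring.
  rewrite heq; field; by apply/andP; split; exact: lt0r_neq0.
have hgood : good c (fstar w) by apply: good_fstar => //; rewrite hE.
have hobjf : P3_objective N gamma p (fstar w) =
    gamma * (Sw w ^+ 3 / T ^+ 2) - lam * (upsilon * c * T).
  by rewrite (obj_lam lam) energy_fstar // hE -sum_w_fstar.
exists (fstar w); split => //; split; last first.
  rewrite /P3_objective (sum_u_fstar hw p) /Sw /qw /w; ring.
apply: E_eq => //.
  move=> g [hg1 [hg2 hg3]].
  rewrite hobjf (obj_lam lam).
  have h1 : Sw w ^+ 3 / T ^+ 2 <= \sum_(k < N) (p k + lam) * g k ^+ 2 by exact: L1w.
  have h1' := ler_wpM2l (ltW hg) h1.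
  have h2 := ler_wpM2l (ltW hl) hg3.
  lra.
Qed.

Lemma caseC : exists f, good (a_thr N gamma upsilon T) f /\
  E_loc_opt N gamma upsilon (a_thr N gamma upsilon T) T p = P3_objective N gamma p f /\
  P3_objective N gamma p f = gamma * (N%:R) ^+ 2 / T ^+ 2 * \sum_(k < N) p k.
Proof.
set a := a_thr N gamma upsilon T.
have hNp : 0 < (N%:R : R) by rewrite ltr0n.
set m := N%:R / T.
have hm : 0 < m by apply: divr_gt0.
have ha : 0 <= a.
  rewrite /a /a_thr; apply: divr_ge0; first by apply: mulr_ge0; [exact: ltW | apply: exprn_ge0; exact: ltW].
  by apply: mulr_ge0; [exact: ltW | apply: exprn_ge0; exact: ltW].
have haT : upsilon * a * T = gamma * N%:R ^+ 3 / T ^+ 2.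
  rewrite /a /a_thr; field; by apply/andP; split; exact: lt0r_neq0.
have hgood : good a (fun=> m).
  split; first by [].
  split.
    rewrite sumr_const card_ord -mulr_natr /m le_eqVlt; apply/orP; left; apply/eqP.
    field; by apply/andP; split; exact: lt0r_neq0.
  rewrite sumr_const card_ord -mulr_natr haT /m le_eqVlt; apply/orP; left; apply/eqP.
  field; exact: lt0r_neq0.
exists (fun=> m); split => //; split; last first.
  rewrite /P3_objective /m mulr_sumr; apply: eq_bigr => k _.
  field; exact: lt0r_neq0.
apply: E_eq => //.
  move=> g [hg1 [hg2 hg3]].
  have hq : forall k, (k < N)%N -> 0 < (fun _ : nat => (1 : R)) k by move=> k _; exact: ltr01.
  have := L1_gap hq hg1 hg2.
  have hS1 : \sum_(j < N) (fun _ : nat => (1 : R)) j = N%:R.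
    by rewrite sumr_const card_ord -mulr_natr mul1r.
  rewrite hS1 -/m.
  have he : \sum_(k < N) (fun _ : nat => (1 : R)) k ^+ 3 * g k ^+ 2 <= N%:R ^+ 3 / T ^+ 2.
    have -> : \sum_(k < N) (fun _ : nat => (1 : R)) k ^+ 3 * g k ^+ 2 =
      gamma^-1 * \sum_(k < N) gamma * g k ^+ 2.
      rewrite mulr_sumr; apply: eq_bigr => k _ /=; rewrite expr1n mul1r mulrA mulVf ?mul1r //.
      exact: lt0r_neq0.
    rewrite haT in hg3.
    have hgi : 0 <= gamma^-1 by rewrite invr_ge0; exact: ltW.
    have := ler_wpM2l hgi hg3.
    have -> : gamma^-1 * (gamma * N%:R ^+ 3 / T ^+ 2) = N%:R ^+ 3 / T ^+ 2.
      field; by apply/andP; split; exact: lt0r_neq0.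
    by [].
  move=> hgap.
  have hz : \sum_(k < N) ((fun _ : nat => (1 : R)) k * g k - m) ^+ 2 *
      ((fun _ : nat => (1 : R)) k * g k + 2 * m) / g k = 0.
    apply/le_anti/andP; split; first by lra.
    apply: sumr_ge0 => k _; apply: term_ge0; [exact: ltr01 | exact: (@hg1 _ (ltn_ord k)) | exact: ltW].
  have hgm : forall k : 'I_N, g k = m.
    move=> k.
    move/eqP: hz; rewrite psumr_eq0; last first.
      move=> i _; apply: term_ge0; [exact: ltr01 | exact: (@hg1 _ (ltn_ord i)) | exact: ltW].
    move/allP => /(_ k (mem_index_enum _)) /= /eqP.
    have hgk := @hg1 _ (ltn_ord k).
    rewrite mul1r => /eqP; rewrite mulf_eq0 invr_eq0 (negbTE (lt0r_neq0 hgk)) orbF.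
    rewrite mulf_eq0 sqrf_eq0 subr_eq0 => /orP [/eqP -> //|].
    have : 0 < g k + 2 * m by lra.
    by move=> /lt0r_neq0 /negbTE ->.
  rewrite /P3_objective le_eqVlt; apply/orP; left; apply/eqP.
  by apply: eq_bigr => k _; rewrite hgm.
Qed.

Lemma inv_conv (t a b : R) : 0 <= t <= 1 -> 0 < a -> 0 < b ->
  1 / ((1 - t) * a + t * b) <= (1 - t) * (1 / a) + t * (1 / b).
Proof.
move=> /andP [ht0 ht1] ha hb.
have hd : 0 < (1 - t) * a + t * b.
  have : 0 <= (1 - t) * a by apply: mulr_ge0; lra.
  have : 0 <= t * b by apply: mulr_ge0; lra.
  nra.
have -> : (1 - t) * (1 / a) + t * (1 / b) =
  1 / ((1 - t) * a + t * b) + t * (1 - t) * (a - b) ^+ 2 / (a * b * ((1 - t) * a + t * b)).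
  field; apply/andP; split; first exact: lt0r_neq0.
  by apply/andP; split; exact: lt0r_neq0.
rewrite lerDl; apply: divr_ge0.
  apply: mulr_ge0; last exact: sqr_ge0.
  by apply: mulr_ge0; lra.
by apply: mulr_ge0; [apply: mulr_ge0; exact: ltW | exact: ltW].
Qed.

Lemma conv_eq (X Y Z : R) : Y - X != 0 ->
  (1 - (Z - X) / (Y - X)) * X + (Z - X) / (Y - X) * Y = Z.
Proof. by move=> h; field. Qed.

Lemma obj_p f : P3_objective N gamma p f = gamma * \sum_(k < N) p k * f k ^+ 2.
Proof. by rewrite /P3_objective mulr_sumr; apply: eq_bigr => k _; rewrite mulrA. Qed.

Lemma energy_p : \sum_(k < N) gamma * fstar p k ^+ 2 =
  upsilon * a'_thr N gamma upsilon T p * T.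
Proof.
rewrite energy_fstar // /a'_thr /Sw /qw; field.
by apply/andP; split; exact: lt0r_neq0.
Qed.

Lemma mono c1 c2 f1 : 0 <= c1 -> c1 < c2 -> c2 < a'_thr N gamma upsilon T p ->
  good c1 f1 -> E_loc_opt N gamma upsilon c1 T p = P3_objective N gamma p f1 ->
  E_loc_opt N gamma upsilon c2 T p < E_loc_opt N gamma upsilon c1 T p.
Proof.
move=> hc1 h12 h2a [hf1 [hs1 he1]] hE1.
set fs := fstar p.
set X := \sum_(k < N) gamma * f1 k ^+ 2.
set Y := \sum_(k < N) gamma * fs k ^+ 2.
set Z := upsilon * c2 * T.
have hYe : Y = upsilon * a'_thr N gamma upsilon T p * T by exact: energy_p.
have hXZ : X < Z.
  apply: (le_lt_trans he1); rewrite /Z ltr_pM2r // ltr_pM2l //.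
have hZY : Z < Y.
  rewrite hYe /Z ltr_pM2r // ltr_pM2l //.
set t := (Z - X) / (Y - X).
have ht0 : 0 < t by apply: divr_gt0; lra.
have ht1 : t < 1 by rewrite /t ltr_pdivrMr; lra.
have hfs : forall k, (k < N)%N -> 0 < fs k by move=> k hk; exact: fstar_gt0.
set ft := fun k => (1 - t) * f1 k + t * fs k.
have hft : forall k, (k < N)%N -> 0 < ft k.
  move=> k hk; rewrite /ft.
  have := hf1 _ hk; have := hfs _ hk => h1 h2.
  have : 0 < (1 - t) * f1 k by apply: mulr_gt0; lra.
  have : 0 < t * fs k by apply: mulr_gt0.
  lra.
have hgood : good c2 ft.
  split; first exact: hft.
  split.
    apply: (@le_trans _ _ (\sum_(k < N) ((1 - t) * (1 / f1 k) + t * (1 / fs k)))).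
      apply: ler_sum => k _; apply: inv_conv.
      - by apply/andP; split; lra.
      - exact: (@hf1 _ (ltn_ord k)).
      - exact: (@hfs _ (ltn_ord k)).
    have -> : \sum_(k < N) ((1 - t) * (1 / f1 k) + t * (1 / fs k)) =
      (1 - t) * \sum_(k < N) 1 / f1 k + t * \sum_(k < N) 1 / fs k.
      by rewrite !mulr_sumr -big_split.
    rewrite /fs sum_inv_fstar //.
    have := ler_wpM2l (_ : 0 <= 1 - t) hs1.
    move=> /(_ _) h; have {}h := h ltac:(lra).
    lra.
  apply: (@le_trans _ _ ((1 - t) * X + t * Y)).
    rewrite /X /Y !mulr_sumr -big_split /=; apply: ler_sum => k _.
    rewrite /ft.
    have : 0 <= t * (1 - t) * gamma * (f1 k - fs k) ^+ 2.
      apply: mulr_ge0; last exact: sqr_ge0.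
      apply: mulr_ge0; last exact: ltW.
      by apply: mulr_ge0; lra.
    have -> : gamma * ((1 - t) * f1 k + t * fs k) ^+ 2 =
      (1 - t) * (gamma * f1 k ^+ 2) + t * (gamma * fs k ^+ 2)
       - t * (1 - t) * gamma * (f1 k - fs k) ^+ 2 by ring.
    lra.
  rewrite le_eqVlt; apply/orP; left; apply/eqP; rewrite /t conv_eq //.
  rewrite subr_eq0; apply/negP => /eqP h; move: hXZ hZY; rewrite h; lra.
set D := \sum_(k < N) gamma * p k * (f1 k - fs k) ^+ 2.
have hobj : P3_objective N gamma p ft =
   (1 - t) * P3_objective N gamma p f1 + t * P3_objective N gamma p fs - t * (1 - t) * D.
  rewrite /P3_objective /D !mulr_sumr -big_split -sumrB /=.
  by apply: eq_bigr => k _; rewrite /ft; ring.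
have hfsf1 : P3_objective N gamma p fs <= P3_objective N gamma p f1.
  rewrite !obj_p; apply: ler_wpM2l; first exact: ltW.
  by rewrite sum_w_fstar //; apply: L1w.
have hD : 0 < D.
  have hnn : forall k : 'I_N, true -> 0 <= gamma * p k * (f1 k - fs k) ^+ 2.
    move=> k _; apply: mulr_ge0; last exact: sqr_ge0.
    by apply: mulr_ge0; [exact: ltW | exact: (ltW (@hp _ (ltn_ord k)))].
  have hD0 : 0 <= D by apply: sumr_ge0.
  rewrite lt_def hD0 andbT; apply/negP => /eqP /(psumr_eq0P hnn) h.
  have hXY : X = Y.
    apply: eq_bigr => k _.
    have /eqP := h k isT; rewrite mulf_eq0 sqrf_eq0 subr_eq0 => /orP [|/eqP -> //].
    rewrite mulf_eq0 => /orP [/eqP hg0|/eqP hp0].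
      by move: hg; rewrite hg0 ltxx.
    by have := @hp _ (ltn_ord k); rewrite hp0 ltxx.
  move: hXZ hZY; rewrite hXY; lra.
apply: (le_lt_trans (E_le hgood)).
rewrite hobj hE1.
have : 0 < t * (1 - t) * D by apply: mulr_gt0 => //; apply: mulr_gt0 => //; lra.
have := ler_wpM2l (ltW ht0) hfsf1.
lra.
Qed.

Definition gfun (l : R) := (\sum_(k < N) powR (p k + l) (1/3)) ^+ 2 *
   (\sum_(k < N) powR (p k + l) (-(2/3))).

Lemma gfun_cont x : 0 <= x -> {for x, continuous gfun}.
Proof.
move=> hx.
have hpx : forall k : 'I_N, 0 < p k + x.
  by move=> k; have := @hp _ (ltn_ord k); lra.
have hA : {for x, continuous (fun l => \sum_(k < N) powR (p k + l) (1/3))}.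
  by apply: sum_cont => k; apply: powR_cont.
have hB : {for x, continuous (fun l => \sum_(k < N) powR (p k + l) (-(2/3)))}.
  by apply: sum_cont => k; apply: powR_cont.
have -> : gfun = ((fun l => \sum_(k < N) powR (p k + l) (1/3)) \*
                  (fun l => \sum_(k < N) powR (p k + l) (1/3))) \*
                 (fun l => \sum_(k < N) powR (p k + l) (-(2/3))).
  by apply/funext => l; rewrite /gfun /= expr2.
apply: (@cvgM R R); last exact: hB.
exact: (@cvgM R R).
Qed.

Lemma gfun_bound L : 0 < L -> (forall k, (k < N)%N -> p k <= 1) ->
  gfun L <= N%:R ^+ 3 * ((1 + L) / L).
Proof.
move=> hL hp1.
set u := powR (1 + L) (1/3).
set v := powR L (1/3).
have hv : 0 < v by apply: q_gt0.
have hu3 : u ^+ 3 = 1 + L by rewrite /u cube3 //; lra.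
have hv3 : v ^+ 3 = L by rewrite /v cube3 //; lra.
have hnn : forall x : R, 0 <= x -> x \in Num.nneg by move=> x hx; rewrite nnegrE.
have hqk : forall k : 'I_N, v <= powR (p k + L) (1/3) <= u.
  move=> k; have := @hp _ (ltn_ord k); have := hp1 _ (ltn_ord k) => h1 h0.
  apply/andP; split; apply: ge0_ler_powR => //; try apply: hnn; lra.
have hvu : v <= u by have /andP [h1 h2] := hqk (Ordinal hN); exact: le_trans h1 h2.
have hNp : 0 <= (N%:R : R) by exact: ler0n.
have hA : \sum_(k < N) powR (p k + L) (1/3) <= N%:R * u.
  have -> : N%:R * u = \sum_(k < N) u by rewrite sumr_const card_ord mulr_natl.
  by apply: ler_sum => k _; have /andP [] := hqk k.
have hA0 : 0 <= \sum_(k < N) powR (p k + L) (1/3) by apply: sumr_ge0 => k _; exact: powR_ge0.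
have hB : \sum_(k < N) powR (p k + L) (-(2/3)) <= N%:R * (v ^+ 2)^-1.
  have -> : N%:R * (v ^+ 2)^-1 = \sum_(k < N) (v ^+ 2)^-1 by rewrite sumr_const card_ord mulr_natl.
  apply: ler_sum => k _; rewrite pow23.
  have /andP [h1 _] := hqk k.
  have hq : 0 < powR (p k + L) (1/3) by exact: lt_le_trans h1.
  rewrite lef_pV2 ?posrE ?exprn_gt0 //.
  by apply: lerXn2r => //; apply: hnn; exact: ltW.
have hB0 : 0 <= \sum_(k < N) powR (p k + L) (-(2/3)) by apply: sumr_ge0 => k _; exact: powR_ge0.
have hA2 : (\sum_(k < N) powR (p k + L) (1/3)) ^+ 2 <= (N%:R * u) ^+ 2.
  by apply: lerXn2r => //; apply: hnn => //; apply: mulr_ge0 => //; exact: le_trans (ltW hv) hvu.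
apply: (le_trans (ler_pM (exprn_ge0 _ hA0) hB0 hA2 hB)).
rewrite -hu3 -hv3.
have -> : (N%:R * u) ^+ 2 * (N%:R * (v ^+ 2)^-1) = N%:R ^+ 3 * (u ^+ 2 / v ^+ 2) by field; exact: lt0r_neq0.
apply: ler_wpM2l; first exact: exprn_ge0.
have -> : u ^+ 3 / v ^+ 3 = u ^+ 2 / v ^+ 2 + u ^+ 2 * (u - v) / v ^+ 3.
  by field; exact: lt0r_neq0.
rewrite lerDl; apply: divr_ge0; last exact: exprn_ge0 (ltW hv).
apply: mulr_ge0; [exact: sqr_ge0 | lra].
Qed.

Lemma gfun_exists G : (forall k, (k < N)%N -> p k <= 1) ->
  N%:R ^+ 3 < G -> G < gfun 0 -> exists2 lam, 0 < lam & gfun lam = G.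
Proof.
move=> hp1 hG1 hG2.
set L := 2 * N%:R ^+ 3 / (G - N%:R ^+ 3).
have hNp : 0 < (N%:R : R) by rewrite ltr0n.
have hN3 : 0 < (N%:R : R) ^+ 3 by exact: exprn_gt0.
have hL : 0 < L by apply: divr_gt0; [apply: mulr_gt0 => // | lra].
have hgL : gfun L < G.
  apply: (le_lt_trans (gfun_bound hL hp1)).
  have -> : N%:R ^+ 3 * ((1 + L) / L) = N%:R ^+ 3 + (G - N%:R ^+ 3) / 2.
    rewrite /L; field; apply/andP; split; first by rewrite subr_eq0; apply/negP => /eqP h; move: hG1; rewrite h ltxx.
    exact: lt0r_neq0.
  lra.
have [c hc hgc] : exists2 c, c \in `[0, L] & gfun c = G.
  apply: IVT; first exact: ltW.
    apply: continuous_in_subspaceT => x hx; apply: gfun_cont.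
    by move: hx; rewrite inE /= in_itv /= => /andP [].
  apply/andP; split.
    by rewrite ge_min; apply/orP; right; exact: ltW.
  by rewrite le_max; apply/orP; left; exact: ltW.
exists c => //.
move: hc; rewrite in_itv /= => /andP [hc0 _].
rewrite lt_def hc0 andbT; apply/negP => /eqP h0; move: hgc; rewrite h0 => h.
by move: hG2; rewrite h ltxx.
Qed.

Lemma good_mono c c' f : c <= c' -> good c f -> good c' f.
Proof.
move=> hcc [h1 [h2 h3]]; split => //; split => //.
apply: (le_trans h3); by rewrite ler_pM2r // ler_pM2l.
Qed.

Lemma E_lb c : 0 <= c -> (exists f, good c f) ->
  gamma / T ^+ 2 * (\sum_(k < N) powR (p k) (1/3)) ^+ 3 <= E_loc_opt N gamma upsilon c T p.
Proof.
move=> hc hex; apply: E_ge => // f [hf1 [hf2 _]].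
rewrite obj_p.
have := L1w hp hf1 hf2; rewrite /Sw /qw => h.
have -> : gamma / T ^+ 2 * (\sum_(k < N) powR (p k) (1/3)) ^+ 3 =
   gamma * ((\sum_(k < N) powR (p k) (1/3)) ^+ 3 / T ^+ 2) by rewrite mulrA mulrAC.
by apply: ler_wpM2l => //; exact: ltW.
Qed.

End Main.

Theorem corollary1 (R : realType) (N : nat) (gamma upsilon Pb h T : R)
  (p : nat -> R) :
  (2 <= N)%N -> 0 < gamma -> 0 < upsilon -> upsilon <= 1 ->
  0 < Pb -> 0 < h -> 0 < T ->
  (forall i j, (i < j)%N -> (j < N)%N -> p j < p i) ->
  0 < p N.-1 -> p 0%N <= 1 ->
  let a := a_thr N gamma upsilon T in
  let a' := a'_thr N gamma upsilon T p in
  let E := E_loc_opt N gamma upsilon (Pb * h) T p in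
  (* (1) *)
  (a < Pb * h < a' ->
     (exists lam : R, 0 < lam /\
        (\sum_(k < N) powR (p k + lam) (1/3)) ^+ 2
          * (\sum_(k < N) powR (p k + lam) (-(2/3)))
        = upsilon * Pb * h * T ^+ 3 / gamma) /\
     (forall lam : R, 0 < lam ->
        (\sum_(k < N) powR (p k + lam) (1/3)) ^+ 2
          * (\sum_(k < N) powR (p k + lam) (-(2/3)))
        = upsilon * Pb * h * T ^+ 3 / gamma ->
        E = gamma / T ^+ 2 * (\sum_(k < N) powR (p k + lam) (1/3)) ^+ 2
              * (\sum_(k < N) p k * powR (p k + lam) (-(2/3))))) /\
  (Pb * h = a -> E = gamma * (N%:R) ^+ 2 / T ^+ 2 * \sum_(k < N) p k) /\
  (forall c1 c2 : R, a <= c1 -> c1 < c2 -> c2 < a' ->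
     E_loc_opt N gamma upsilon c2 T p < E_loc_opt N gamma upsilon c1 T p) /\
  (a <= Pb * h < a' ->
     gamma / T ^+ 2 * (\sum_(k < N) powR (p k) (1/3)) ^+ 3 < E /\
     E <= gamma * (N%:R) ^+ 2 / T ^+ 2 * \sum_(k < N) p k) /\
  (* (2) *)
  (a' <= Pb * h -> E = gamma / T ^+ 2 * (\sum_(k < N) powR (p k) (1/3)) ^+ 3).
Proof.
move=> hN2 hg hu hu1 hPb hh hT hdec hpN hp0 a a' E.
have hN : (0 < N)%N by lia.
have hp : forall k, (k < N)%N -> 0 < p k.
  move=> k hk; case: (ltnP k N.-1) => hk'.
    apply: (lt_trans hpN); apply: hdec => //; lia.
  by have -> : k = N.-1 by lia.
have hp1 : forall k, (k < N)%N -> p k <= 1.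
  move=> k hk; case: k hk => [//|k] hk.
  by apply: (le_trans _ hp0); apply: ltW; apply: hdec.
have hNp : 0 < (N%:R : R) by rewrite ltr0n.
have ha0 : 0 <= a.
  rewrite /a /a_thr; apply: divr_ge0; first by apply: mulr_ge0; [exact: ltW | apply: exprn_ge0; exact: ltW].
  by apply: mulr_ge0; [exact: ltW | apply: exprn_ge0; exact: ltW].
have hkey : gfun N p 0 = upsilon * a' * T ^+ 3 / gamma.
  rewrite /gfun /a' /a'_thr.
  have e1 : \sum_(k < N) powR (p k + 0) (1/3) = \sum_(k < N) powR (p k) (1/3).
    by apply: eq_bigr => k _; rewrite addr0.
  have e2 : \sum_(k < N) powR (p k + 0) (-(2/3)) = \sum_(k < N) powR (p k) (-(2/3)).
    by apply: eq_bigr => k _; rewrite addr0.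
  rewrite e1 e2.
  field; by rewrite !lt0r_neq0.
have hNa : N%:R ^+ 3 = upsilon * a * T ^+ 3 / gamma.
  rewrite /a /a_thr; field; by rewrite !lt0r_neq0.
have [f0 [hf0 [hEf0 hobj0]]] := caseC hN hg hu hT hp.
have hlb : forall c, a <= c ->
    gamma / T ^+ 2 * (\sum_(k < N) powR (p k) (1/3)) ^+ 3 <= E_loc_opt N gamma upsilon c T p.
  move=> c hc; apply: (E_lb hN hg hu hT hp); first exact: le_trans hc.
  by exists f0; exact: good_mono hc hf0.
have hG : forall c, a < c -> c < a' ->
    N%:R ^+ 3 < upsilon * c * T ^+ 3 / gamma /\ upsilon * c * T ^+ 3 / gamma < gfun N p 0.
  move=> c h1 h2; rewrite hNa hkey; split.
    by rewrite ltr_pM2r ?invr_gt0 // ltr_pM2r ?exprn_gt0 // ltr_pM2l.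
  by rewrite ltr_pM2r ?invr_gt0 // ltr_pM2r ?exprn_gt0 // ltr_pM2l.
have hopt : forall c, a <= c -> c < a' -> exists f, good N gamma upsilon T c f /\
    E_loc_opt N gamma upsilon c T p = P3_objective N gamma p f.
  move=> c h1 h2; case: (eqVneq c a) => [->|hne].
    by exists f0.
  have h1' : a < c by rewrite lt_def hne h1.
  have [hG1 hG2] := hG c h1' h2.
  have [lam hl hgl] := gfun_exists hN hp hp1 hG1 hG2.
  have [f [hf [hEf _]]] := caseB hN hg hu hT hp (le_trans ha0 h1) hl hgl.
  by exists f.
split.
  move=> /andP [h1 h2].
  have [hG1 hG2] := hG _ h1 h2.
  have hmA : upsilon * Pb * h * T ^+ 3 / gamma = upsilon * (Pb * h) * T ^+ 3 / gamma.
    by rewrite mulrA.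
  split.
    have [lam hl hgl] := gfun_exists hN hp hp1 hG1 hG2.
    by exists lam; split => //; rewrite hmA.
  move=> lam hl heq; rewrite hmA in heq.
  have [f [hf [hEf hof]]] := caseB hN hg hu hT hp (le_trans ha0 (ltW h1)) hl heq.
  by rewrite /E hEf hof.
split.
  move=> hca; rewrite /E hca hEf0 hobj0 //.
split.
  move=> c1 c2 h1 h12 h2.
  have [f1 [hf1 hE1]] := hopt c1 h1 (lt_trans h12 h2).
  exact: (mono hN hg hu hT hp (le_trans ha0 h1) h12 h2 hf1 hE1).
split.
  move=> /andP [h1 h2]; split.
    set c' := (Pb * h + a') / 2.
    have hc1 : Pb * h < c' by rewrite /c'; lra.
    have hc2 : c' < a' by rewrite /c'; lra.
    have [f1 [hf1 hE1]] := hopt _ h1 h2.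
    have := mono hN hg hu hT hp (le_trans ha0 h1) hc1 hc2 hf1 hE1.
    have := hlb c' ltac:(lra).
    rewrite /E; lra.
  rewrite -hobj0 /E; apply: (E_le hN hg hp); exact: good_mono h1 hf0.
move=> h1; exact: (caseA hN hg hu hT hp h1).
Qed.
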